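(* Let $\mathbb{T}=\mathbb{R}/\mathbb{Z}$ with Haar probability measure $\mu$ and inner measure $\mu_*$. There exists a set $B\subset\mathbb{T}$ such that for all positive integers $m,n$, \[\sup_{F\subset B,\ F\text{ compact}}\mu(mF-nF)\neq\mu_*(mB-nB).\]
   Context: $\mu_*(S)=\sup\{\mu(K):K\subset S,\ K\text{ compact}\}$. $mB-nB=\{b_1+\dots+b_m-b_1'-\dots-b_n':b_i,b_j'\in B\}$. *)

(* Defs.v *)
From HB Require Import structures.
From mathcomp Require Import all_boot all_order all_algebra.
From mathcomp Require Import all_classical all_reals all_analysis.
Set Implicit Arguments. Unset Strict Implicit. Unset Printing Implicit Defensive.
Import Order.TTheory GRing.Theory Num.Theory.
Import numFieldNormedType.Exports.
Local Open Scope classical_set_scope.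
Local Open Scope ring_scope.

(* The torus T = R/Z, realized as the unit circle in R x R via
   e t = (cos (2 pi t), sin (2 pi t)); e is a topological-group isomorphism
   from R/Z onto the circle (group law: e s * e t = e (s + t)). *)
Definition torus_e {R : realType} (t : R) : R * R :=
  (cos (2 * pi * t), sin (2 * pi * t)).

Definition torus {R : realType} : set (R * R) := range (@torus_e R).

Definition haarT {R : realType} (A : set (R * R)) : \bar R :=
  (@lebesgue_measure R) [set t : R | 0 <= t < 1 /\ A (torus_e t)].

Definition inner_haarT {R : realType} (S : set (R * R)) : \bar R :=
  ereal_sup [set haarT K | K in [set K : set (R * R) | K `<=` S /\ compact K]].

Definition sumdiffT {R : realType} (m n : nat) (A : set (R * R)) : set (R * R) :=
  [set x | exists (a : 'I_m -> R) (c : 'I_n -> R),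
     (forall i, A (torus_e (a i))) /\ (forall j, A (torus_e (c j))) /\
     x = torus_e (\sum_(i < m) a i - \sum_(j < n) c j)].

(* Main.v *)
Require Import Defs.
From HB Require Import structures.
From mathcomp Require Import all_boot all_order all_algebra.
From mathcomp Require Import all_classical all_reals all_analysis.
Import Order.TTheory GRing.Theory Num.Theory.
Import numFieldNormedType.Exports.
Local Open Scope classical_set_scope.
Local Open Scope ring_scope.
From mathcomp Require Import ring lra wochoice.
Set Implicit Arguments. Unset Strict Implicit. Unset Printing Implicit Defensive.

Definition Cs := nat -> bool.
Definition big {X : Type} (Z : set X) :=
  exists f : Cs -> X, injective f /\ forall c, Z (f c).

Definition pairC (a b : Cs) : Cs := fun n => if odd n then b n./2 else a n./2.
Definition fstC (x : Cs) : Cs := fun n => x n.*2.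
Definition sndC (x : Cs) : Cs := fun n => x n.*2.+1.

Lemma fstC_pair a b : fstC (pairC a b) = a.
Proof. by apply: funext => n; rewrite /fstC /pairC odd_double doubleK. Qed.
Lemma sndC_pair a b : sndC (pairC a b) = b.
Proof.
apply: funext => n; rewrite /sndC /pairC /= odd_double /=.
by rewrite uphalf_double.
Qed.

Lemma pairC_inj a b a' b' : pairC a b = pairC a' b' -> a = a' /\ b = b'.
Proof.
move=> e; split.
  by rewrite -(fstC_pair a b) e fstC_pair.
by rewrite -(sndC_pair a b) e sndC_pair.
Qed.

Lemma big_sub X (Z Z' : set X) : Z `<=` Z' -> big Z -> big Z'.
Proof. by move=> s [f [fi fZ]]; exists f; split => // c; apply: s. Qed.

Lemma bigU X (Z1 Z2 : set X) : big (Z1 `|` Z2) -> big Z1 \/ big Z2.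
Proof.
move=> [f [fi fZ]].
case: (pselect (exists a, forall b, Z2 (f (pairC a b)))) => [[a Ha]|Hn].
  right; exists (fun b => f (pairC a b)); split => // b b' /fi /pairC_inj [].
  by [].
left.
have H : forall a, exists b, Z1 (f (pairC a b)).
  move=> a; apply: contrapT => Hna; apply: Hn; exists a => b.
  case: (fZ (pairC a b)) => // h; exfalso; apply: Hna; by exists b.
have [g Hg] := choice H.
exists (fun a => f (pairC a (g a))); split => // a a' /fi /pairC_inj [].
by [].
Qed.

Lemma big_set1 X (p : X) : ~ big [set p].
Proof.
move=> [f [fi fZ]].
have : (fun _ : nat => false) = (fun _ => true).
  by apply: fi; rewrite (fZ (fun _ => false)) (fZ (fun _ => true)).
by move/(congr1 (fun g : Cs => g 0%N)).
Qed.

Lemma big_set0 X : ~ big (@set0 X).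
Proof. by move=> [f [_ fZ]]; apply: (fZ (fun _ => false)). Qed.

Lemma big_inj_image X Y (Z : set X) (phi : X -> Y) :
  (forall x y, Z x -> Z y -> phi x = phi y -> x = y) ->
  big Z -> big (phi @` Z).
Proof.
move=> pi [f [fi fZ]]; exists (phi \o f); split.
  by move=> a b /= e; apply: fi; apply: pi.
by move=> c; exists (f c).
Qed.

Lemma good_order : exists lt : Cs -> Cs -> Prop,
  [/\ well_founded lt,
      (forall x y, lt x y \/ x = y \/ lt y x) &
      (forall x, ~ big [set y | lt y x])].
Proof.
have [R0 wo] := well_ordering_principle (nat -> bool).
have minP : forall P : Cs -> Prop, (exists x, P x) ->
    exists z, P z /\ forall y, P y -> R0 z y.
  move=> P [x Px].
  have ne : wochoice.nonempty [pred y : nat -> bool | `[< P y >]].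
    by rewrite /wochoice.nonempty; exists x; rewrite inE.
  have [z [[zA zlb] _]] := wo _ ne.
  exists z; split; first by move: zA; rewrite inE.
  by move=> y Py; apply: zlb; rewrite inE.
have refl : forall x, R0 x x.
  move=> x; have ne : wochoice.nonempty (pred1 x) by rewrite /wochoice.nonempty; exists x; rewrite inE.
  have [z [[zA zlb] _]] := wo _ ne.
  move: zA; rewrite inE => zx; rewrite -{1}zx; apply: zlb.
  by rewrite inE.
have pairmin : forall x y, exists z, (z = x \/ z = y) /\ R0 z x /\ R0 z y /\
    forall z', minimum_of R0 [pred w : nat -> bool | (w == x) || (w == y)] z' -> z = z'.
  move=> x y.
  have ne : wochoice.nonempty [pred w : nat -> bool | (w == x) || (w == y)].
    by rewrite /wochoice.nonempty; exists x; rewrite inE eqxx.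
  have [z [[zA zlb] uz]] := wo _ ne.
  exists z; split; first by move: zA; rewrite inE => /orP [] /eqP; tauto.
  split; first by apply: zlb; rewrite inE eqxx.
  split; first by apply: zlb; rewrite inE eqxx orbT.
  exact: uz.
have anti : forall x y, R0 x y -> R0 y x -> x = y.
  move=> x y Rxy Ryx.
  have [z [_ [_ [_ uz]]]] := pairmin x y.
  have mx : forall w, w = x \/ w = y -> R0 w x -> R0 w y ->
      minimum_of R0 [pred w : nat -> bool | (w == x) || (w == y)] w.
    move=> w hw h1 h2; split; first by rewrite inE; case: hw => ->; rewrite eqxx ?orbT.
    by move=> v; rewrite inE => /orP [] /eqP ->.
  rewrite -(uz x (mx x (or_introl erefl) (refl x) Rxy)).
  exact: (uz y (mx y (or_intror erefl) Ryx (refl y))).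
have total : forall x y, R0 x y \/ R0 y x.
  move=> x y; have [z [[] -> [h1 [h2 _]]]] := pairmin x y; tauto.
pose lt0 x y := R0 x y /\ x <> y.
have tri0 : forall x y, lt0 x y \/ x = y \/ lt0 y x.
  move=> x y; case: (pselect (x = y)) => [->|nxy]; first by right; left.
  case: (total x y) => h; [left | right; right]; split => //.
  by move=> e; apply: nxy.
have wf0 : well_founded lt0.
  move=> x; apply: contrapT => nA.
  have [z [nAz zmin]] := minP (fun x => ~ Acc lt0 x) (ex_intro _ x nA).
  apply: nAz; constructor => y [Ryz nyz].
  apply: contrapT => nAy; apply: nyz; apply: anti => //; exact: zmin.
case: (pselect (exists x, big [set y | lt0 y x])) => [ex|nex]; last first.
  exists lt0; split => // x bx; apply: nex; by exists x.
have [x0 [[iota [iotai iotax]] x0min]] := minP _ ex.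
pose lt1 a b := lt0 (iota a) (iota b).
exists lt1; split.
- have accI : forall b, Acc lt0 b -> forall a, iota a = b -> Acc lt1 a.
    move=> b; elim => {}b _ IH a ab; constructor => a' h.
    by apply: (IH (iota a')) => //; rewrite -ab.
  by move=> a; apply: (accI (iota a)).
- move=> a b; case: (tri0 (iota a) (iota b)) => [h|[h|h]].
  + by left.
  + by right; left; apply: iotai.
  + by right; right.
- move=> a [f [fi fa]].
  have bb : big [set y | lt0 y (iota a)].
    exists (iota \o f); split; last by move=> c; exact: fa.
    by move=> c c' /iotai /fi.
  have := x0min _ bb.
  case: (iotax a) => h1 h2 h3; apply: h2; exact: anti.
Qed.

Lemma countable_sub T (A B : set T) : A `<=` B -> countable B -> countable A.
Proof. by move=> AB cB; apply: sub_countable cB; exact: subset_card_le. Qed.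

Lemma countableU T (A B : set T) : countable A -> countable B -> countable (A `|` B).
Proof.
move=> cA cB.
have -> : A `|` B = \bigcup_(i in [set: bool]) (if i then A else B).
  apply/seteqP; split => x.
    by case=> h; [exists true | exists false].
  by case=> -[] _ h; [left | right].
by apply: bigcup_countable => [|[]]; first exact: countableP.
Qed.

Lemma countable_img T U (f : T -> U) (A : set T) : countable A -> countable (f @` A).
Proof.
move=> cA; rewrite /countable; apply: card_le_trans cA; exact: card_image_le.
Qed.

Lemma countable_subsingleton T (A : set T) :
  (forall x y, A x -> A y -> x = y) -> countable A.
Proof.
move=> h; case: (pselect (exists x, A x)) => [[x Ax]|nx].
  apply: (countable_sub (B := [set x])); last exact: countable1.
  by move=> y Ay; rewrite /= (h _ _ Ay Ax).
apply: (countable_sub (B := set0)); last exact: countable0.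
by move=> y Ay; apply: nx; exists y.
Qed.

Section Scheme.
Variable R : realType.
Variables (Q : set R) (q0 : R).

Definition nxt (q e : R) : R := get [set q' | Q q' /\ q' != q /\ `|q - q'| < e].
Definition stp (s : R * R) (b : bool) : R * R :=
  let q' := nxt s.1 (s.2 / 2) in let d := `|s.1 - q'| in
  if b then (q', d / 3) else (s.1, d / 3).
Fixpoint sq (c : Cs) (n : nat) : R * R :=
  if n is n'.+1 then stp (sq c n') (c n') else (q0, 1).
Definition lo c n := (sq c n).1 - (sq c n).2.
Definition pt c := sup (range (lo c)).

Hypothesis HQ0 : Q q0.
Hypothesis dQ : forall q, Q q -> forall e, 0 < e ->
  exists q', Q q' /\ q' != q /\ `|q - q'| < e.

Lemma nxtP s : Q s.1 -> 0 < s.2 ->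
  let q' := nxt s.1 (s.2 / 2) in Q q' /\ q' != s.1 /\ `|s.1 - q'| < s.2 / 2.
Proof.
move=> Qs rs; have e0 : 0 < s.2 / 2 by rewrite divr_gt0.
exact: (xgetPex point (dQ Qs e0)).
Qed.

Lemma stp_props s b : Q s.1 -> 0 < s.2 ->
  [/\ Q (stp s b).1, 0 < (stp s b).2, (stp s b).2 <= s.2 / 2 &
      forall x, `|x - (stp s b).1| <= (stp s b).2 -> `|x - s.1| <= s.2].
Proof.
move=> Qs rs; have [Qq' [nq dq]] := nxtP Qs rs.
set q' := nxt s.1 (s.2 / 2) in Qq' nq dq *.
have d0 : 0 < `|s.1 - q'|.
  by rewrite normr_gt0 subr_eq0 eq_sym.
rewrite /stp -/q'; case: b => /=; split => //.
- by rewrite divr_gt0.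
- lra.
- move=> x hx; have := ler_distD q' x s.1.
  by rewrite [`|q' - s.1|]distrC; lra.
- by rewrite divr_gt0.
- lra.
- by move=> x hx; lra.
Qed.

Lemma sq_inv c n : Q (sq c n).1 /\ 0 < (sq c n).2.
Proof.
elim: n => [|n [IH1 IH2]] /=; first by split => //; lra.
by have [] := stp_props (c n) IH1 IH2.
Qed.

Lemma sq_rad c n : (sq c n).2 <= n.+1%:R^-1.
Proof.
elim: n => [|n IH] /=; first by rewrite invr1.
have [h1 h2] := sq_inv c n.
have [_ _ h3 _] := stp_props (c n) h1 h2.
apply: (le_trans h3).
have ha : 1 <= n.+1%:R :> R by rewrite ler1n.
have -> : n.+2%:R = n.+1%:R + 1 :> R by rewrite -addn1 natrD.
move: (n.+1%:R : R) ha IH => a ha IH.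
have e : (a + 1)^-1 - a^-1 / 2 = (a - 1) / (2 * a * (a + 1)).
  by field; apply/andP; split; apply/negP => /eqP h; lra.
have : 0 <= (a - 1) / (2 * a * (a + 1)).
  by apply: divr_ge0; [lra | apply: mulr_ge0; [apply: mulr_ge0|]; lra].
rewrite -e; lra.
Qed.
Lemma sq_nest c m n : (m <= n)%N -> forall x,
  `|x - (sq c n).1| <= (sq c n).2 -> `|x - (sq c m).1| <= (sq c m).2.
Proof.
elim: n => [|n IH]; first by rewrite leqn0 => /eqP ->.
rewrite leq_eqVlt => /orP [/eqP -> //|]; rewrite ltnS => mn x hx.
apply: (IH mn); have [h1 h2] := sq_inv c n.
by have [_ _ _ h] := stp_props (c n) h1 h2; apply: h.
Qed.

Lemma lo_in c n : `|lo c n - (sq c n).1| <= (sq c n).2.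
Proof.
have [_ h] := sq_inv c n.
by rewrite /lo addrAC subrr add0r normrN gtr0_norm.
Qed.

Lemma lo_le_hi c n k : lo c n <= (sq c k).1 + (sq c k).2.
Proof.
have h1 := sq_nest (leq_maxl n k) (lo_in c (maxn n k)).
have h2 := sq_nest (leq_maxr n k) (lo_in c (maxn n k)).
move: h1 h2; rewrite !ler_norml /lo; lra.
Qed.

Lemma pt_ball c n : `|pt c - (sq c n).1| <= (sq c n).2.
Proof.
have ub : has_ubound (range (lo c)).
  by exists ((sq c 0%N).1 + (sq c 0%N).2) => _ [k _ <-]; exact: lo_le_hi.
have h1 : lo c n <= pt c by apply: ub_le_sup => //; exists n.
have h2 : pt c <= (sq c n).1 + (sq c n).2.
  apply: ge_sup; first by exists (lo c 0%N), 0%N.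
  by move=> _ [k _ <-]; exact: lo_le_hi.
move: h1 h2; rewrite ler_norml /lo; lra.
Qed.

Lemma pt_G (G : set R) : closed G -> Q `<=` G -> forall c, G (pt c).
Proof.
move=> cG QG c; apply: cG => B /nbhs_ballP [e /= e0 eB].
have [n ne] : exists n : nat, n.+1%:R^-1 < e.
  exists (Num.trunc e^-1); rewrite -ltf_pV2 ?posrE ?invr_gt0 ?ltr0n //.
  by rewrite invrK truncnS_gt.
exists (sq c n).1; split; first by apply: QG; have [] := sq_inv c n.
apply: eB; rewrite /ball /=.
have h1 := pt_ball c n; have h2 := sq_rad c n.
by apply: (le_lt_trans h1); apply: (le_lt_trans h2).
Qed.

Lemma pt_inj : injective pt.
Proof.
move=> c c' e; apply: contrapT => ncc.
have ex : exists k, c k != c' k.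
  apply: contrapT => h; apply: ncc; apply: funext => k.
  by apply/eqP; apply: contrapT => h'; apply: h; exists k; apply/negP.
case: (ex_minnP ex) => k ck kmin.
have same : forall i, (i <= k)%N -> sq c i = sq c' i.
  elim=> [|i IH] ik //=; rewrite IH ?(ltnW ik) //.
  by congr stp; apply/eqP; apply: contraTT ik; rewrite -ltnNge ltnS; apply: kmin.
have [h1 h2] := sq_inv c k.
have hc := pt_ball c k.+1; have hc' := pt_ball c' k.+1.
rewrite /= (same k (leqnn k)) in hc hc'.
rewrite e in hc.
have [Qq' [nq dq]] := nxtP h1 h2.
move: hc hc' ck; rewrite /stp -(same k (leqnn k)).
set q := (sq c k).1 in h1 Qq' nq dq *; set q' := nxt q _ in Qq' nq dq *.
have d0 : 0 < `|q - q'| by rewrite normr_gt0 subr_eq0 eq_sym.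
have tri := ler_distD (pt c') q q'.
rewrite [`|q - pt c'|]distrC in tri.
by case: (c k); case: (c' k) => //= ha hb _; lra.
Qed.

Lemma scheme_big (G : set R) : closed G -> Q `<=` G -> big G.
Proof. by move=> cG QG; exists pt; split; [exact: pt_inj | exact: pt_G]. Qed.

End Scheme.

Section Perfect.
Variable R : realType.

Lemma perfect_big (G : set R) : closed G -> ~ countable G -> big G.
Proof.
move=> cG ncG.
pose Q := [set x | G x /\ forall e, 0 < e -> ~ countable (G `&` [set y | `|x - y| < e])].
have cGQ : countable (G `\` Q).
  pose D := [set ab : rat * rat | countable (G `&` [set y | ratr ab.1 < y < ratr ab.2])].
  apply: (countable_sub (B := \bigcup_(ab in D) (G `&` [set y | ratr ab.1 < y < ratr ab.2]))); last first.
    by apply: bigcup_countable => //; exact: countableP.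
  move=> x [Gx nQx].
  have [e e0 ce] : exists2 e, 0 < e & countable (G `&` [set y | `|x - y| < e]).
    apply: contrapT => h; apply: nQx; split => // e e0 ce; apply: h; by exists e.
  have [a] := @rat_in_itvoo R (x - e) x ltac:(by rewrite ltrBlDr ltrDl).
  have [b] := @rat_in_itvoo R x (x + e) ltac:(by rewrite ltrDl).
  rewrite !in_itv /= => /andP [b1 b2] /andP [a1 a2].
  exists (a, b) => /=; last by split => //; apply/andP.
  apply: (countable_sub (B := G `&` [set y | `|x - y| < e])) => // y [Gy /andP [y1 y2]].
  split => //=; rewrite ltr_norml; apply/andP; split; lra.
have [q0 Qq0] : Q !=set0.
  apply: contrapT => h; apply: ncG; apply: (countable_sub (B := G `\` Q)) => // x Gx.
  split => // Qx; apply: h; by exists x.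
apply: (scheme_big (Q := Q) (q0 := q0)) => //; last by move=> x [].
move=> q [Gq Hq] e e0; apply: contrapT => h; apply: (Hq e e0).
apply: (countable_sub (B := (G `\` Q) `|` [set q])); last first.
  by apply: countableU => //; exact: countable1.
move=> y [Gy qy]; case: (pselect (y = q)) => [->|nyq]; first by right.
left; split => // Qy; apply: h; exists y; split => //; split => //.
by apply/eqP.
Qed.

Lemma itv_big (a b : R) : a < b -> big [set x | a <= x <= b].
Proof.
move=> ab.
have cl : closed [set x : R | a <= x <= b].
  have := @itv_closed _ R a b.
  by congr closed; apply/seteqP; split => x; rewrite /= in_itv.
apply: (scheme_big (Q := [set x | a < x < b]) (q0 := (a + b) / 2)) => //.
- by apply/andP; split; lra.
- move=> q /andP [q1 q2] e e0; exists (q + Num.min e (b - q) / 2).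
  have m1 : 0 < Num.min e (b - q) by rewrite lt_min e0 subr_gt0.
  have m2 : Num.min e (b - q) <= e by rewrite ge_min lexx.
  have m3 : Num.min e (b - q) <= b - q by rewrite ge_min lexx orbT.
  split; first by apply/andP; split; lra.
  split; first by apply/negP => /eqP h; lra.
  by rewrite opprD addrA subrr add0r normrN gtr0_norm; lra.
- by move=> x /andP [x1 x2]; apply/andP; split; lra.
Qed.

End Perfect.

Section Coding.
Variable R : realType.

Definition qn (n : nat) : R := ratr (odflt 0 (@unpickle rat n)).
Definition realcode (x : R) : Cs := fun n => qn n < x.

Lemma realcode_lt (x y : R) : y < x -> realcode x <> realcode y.
Proof.
move=> yx e; have [q] := rat_in_itvoo yx; rewrite in_itv /= => /andP [h1 h2].
have := congr1 (fun f => f (pickle q)) e; rewrite /realcode /qn pickleK /=.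
by rewrite h2 ltNge (ltW h1).
Qed.

Lemma realcode_inj : injective realcode.
Proof.
move=> x y e; case: (ltgtP x y) => // h; first by have := realcode_lt h; rewrite e.
by have := realcode_lt h.
Qed.

Definition rq (n : nat) : rat * rat := odflt (0, 0) (@unpickle (rat * rat)%type n).
Definition setcode (G : set R) : Cs :=
  fun n => `[< G `&` [set y | ratr (rq n).1 < y < ratr (rq n).2] = set0 >].

Lemma setcode_aux (G G' : set R) x : closed G' -> G x -> ~ G' x ->
  setcode G <> setcode G'.
Proof.
move=> cG' Gx nG'x e.
have : ~ closure G' x by move=> /cG'.
move=> /existsNP [B /not_implyP [/nbhs_ballP [r /= r0 rB] hB]].
have [a] := @rat_in_itvoo R (x - r) x ltac:(by rewrite ltrBlDr ltrDl).
have [b] := @rat_in_itvoo R x (x + r) ltac:(by rewrite ltrDl).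
rewrite !in_itv /= => /andP [b1 b2] /andP [a1 a2].
have := congr1 (fun f => f (pickle (a, b))) e; rewrite /setcode /rq pickleK /=.
have -> : G' `&` [set y | ratr a < y < ratr b] = set0.
  apply/seteqP; split => // y [G'y /andP [y1 y2]]; apply: hB; exists y; split => //.
  apply: rB; rewrite /ball /= ltr_norml; apply/andP; split; lra.
move=> h.
have h2 : G `&` [set y | ratr a < y < ratr b] = set0.
  by apply/asboolP; rewrite h; apply/asboolP.
have : (G `&` [set y | ratr a < y < ratr b]) x by split => //; apply/andP.
by rewrite h2.
Qed.

Lemma setcode_inj (G G' : set R) : closed G -> closed G' ->
  setcode G = setcode G' -> G = G'.
Proof.
move=> cG cG' e; apply/seteqP; split => x hx; apply: contrapT => nx.
  exact: (setcode_aux cG' hx nx).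
exact: (setcode_aux cG hx nx (esym e)).
Qed.

Definition T0 (c : Cs) : R := get [set t : R | 1/4 <= t <= 1/3 /\ realcode t = c].
Definition tgt (x : Cs) : R :=
  let v := T0 (fstC x) in if (1/4 <= v) && (v <= 1/3) then v else 1/4.

Lemma tgt_range x : 1/4 <= tgt x <= 1/3.
Proof.
rewrite /tgt; case: ifP => // _; apply/andP; split => //.
lra.
Qed.

Lemma tgt_surj t : 1/4 <= t <= 1/3 -> exists x, tgt x = t.
Proof.
move=> ht; exists (pairC (realcode t) (fun _ => false)).
rewrite /tgt fstC_pair.
have := @xgetPex R point [set v : R | 1/4 <= v <= 1/3 /\ realcode v = realcode t]
  (ex_intro _ t (conj ht erefl)).
rewrite -/(T0 (realcode t)) => -[hv ev].
by rewrite hv; apply: realcode_inj.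
Qed.

Definition task (x : Cs) : set R :=
  [set s | exists G, closed G /\ setcode G = sndC x /\ G s].

Lemma task_surj (G : set R) : closed G -> exists x, task x = G.
Proof.
move=> cG; exists (pairC (fun _ => false) (setcode G)); rewrite /task sndC_pair.
apply/seteqP; split => s; last by move=> Gs; exists G.
by move=> [G' [cG' [e G's]]]; rewrite -(setcode_inj cG' cG e).
Qed.


End Coding.

Section Torus.
Variable R : realType.
Local Notation te := (@torus_e R).

Lemma te_cos s : (te s).1 = cos (2 * pi * s). Proof. by []. Qed.

Lemma cos_half_inj (s s' : R) : 0 <= s <= 1/2 -> 0 <= s' <= 1/2 ->
  cos (2 * pi * s) = cos (2 * pi * s') -> s = s'.
Proof.
move=> hs hs' e.
have p0 := pi_gt0 R.
have inI : forall u : R, 0 <= u <= 1/2 -> 2 * pi * u \in `[0, pi].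
  move=> u /andP [u1 u2]; rewrite in_itv /=; apply/andP; split.
    by apply: mulr_ge0 => //; apply: mulr_ge0 => //; lra.
  have : 2 * pi * u <= 2 * pi * (1/2) by apply: ler_wpM2l => //; lra.
  by have -> : 2 * pi * (1/2) = pi :> R by field.
have := cos_inj (inI _ hs) (inI _ hs') e.
by move/mulfI; apply; apply/negP => /eqP h; lra.
Qed.

Lemma te_inj_half (s s' : R) : 0 <= s <= 1/2 -> 0 <= s' <= 1/2 -> te s = te s' -> s = s'.
Proof. by move=> hs hs' /(congr1 fst) /= e; exact: cos_half_inj. Qed.

Lemma te_inj_neg (s s' : R) : -(1/2) <= s <= 0 -> -(1/2) <= s' <= 0 -> te s = te s' -> s = s'.
Proof.
move=> /andP [h1 h2] /andP [h3 h4] /(congr1 fst) /= e.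
suff : -s = -s' by move/eqP; rewrite eqr_opp => /eqP.
apply: cos_half_inj; try (apply/andP; split; lra).
by rewrite !mulrN !cosN.
Qed.

Lemma te_add1 (a : R) : te (a + 1) = te a.
Proof.
rewrite /torus_e mulrDr mulr1.
have -> : 2 * pi = pi *+ 2 :> R by rewrite mulr2n mulrDl mul1r.
by rewrite cosD2pi sinD2pi.
Qed.

Lemma te_addn (a : R) (n : nat) : te (a + n%:R) = te a.
Proof. by elim: n => [|n IH]; rewrite ?addr0 // -addn1 natrD addrA te_add1. Qed.

Lemma te_subn (a : R) (n : nat) : te (a - n%:R) = te a.
Proof. by rewrite -{2}(subrK n%:R a) te_addn. Qed.

Lemma te_addz (a : R) (k : int) : te (a + k%:~R) = te a.
Proof.
case: k => n; first by rewrite te_addn.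
by rewrite NegzE mulrNz te_subn.
Qed.

Lemma te_reduce (a : R) : exists s, -(1/2) <= s <= 1/2 /\ te a = te s.
Proof.
exists (a - (Num.floor (a + 1/2))%:~R).
have /andP [h1 h2] := floor_itv (a + 1/2).
rewrite intrD in h2.
split; first by apply/andP; split; lra.
by rewrite -intrN te_addz.
Qed.

Definition padd (p q : R * R) : R * R := (p.1 * q.1 - p.2 * q.2, p.2 * q.1 + p.1 * q.2).
Definition pneg (p : R * R) : R * R := (p.1, - p.2).

Lemma te_add (u v : R) : te (u + v) = padd (te u) (te v).
Proof. by rewrite /torus_e /padd /= mulrDr cosD sinD. Qed.

Lemma te_neg (u : R) : te (- u) = pneg (te u).
Proof. by rewrite /torus_e /pneg /= mulrN cosN sinN. Qed.

Lemma te_cont : continuous te.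
Proof.
move=> x; rewrite /torus_e.
apply: (@cvg_pair _ _ _ _ (nbhs (cos (2 * pi * x))) (nbhs (sin (2 * pi * x)))).
- apply: (continuous_comp (f := fun t => 2 * pi * t) (g := cos)).
    exact: mulrl_continuous.
  exact: continuous_cos.
- apply: (continuous_comp (f := fun t => 2 * pi * t) (g := sin)).
    exact: mulrl_continuous.
  exact: continuous_sin.
Qed.

Lemma haarT_countable (P : set (R * R)) (W : set R) :
  countable W -> P `<=` te @` W -> haarT P = 0%E.
Proof.
move=> cW PW; rewrite /haarT; apply: countable_lebesgue_measure0.
apply: (countable_sub (B := \bigcup_(w in W)
   ([set t | 0 <= t <= 1/2 /\ te t = te w] `|` [set t | 1/2 <= t <= 1 /\ te t = te w]))).
  move=> t /= [/andP [t0 t1] /PW [w Ww ew]]; exists w => //.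
  case: (leP t (1/2)) => ht; [left | right]; split => //; apply/andP; split; lra.
apply: bigcup_countable => // w Ww; apply: countableU; apply: countable_subsingleton.
  move=> x y [hx ex] [hy ey]; apply: te_inj_half => //; by rewrite ex ey.
move=> x y [/andP [x1 x2] ex] [/andP [y1 y2] ey].
suff : x - 1 = y - 1 by move/(congr1 (fun z => z + 1)); rewrite !subrK.
have e1 : te (x - 1) = te x := te_subn x 1.
have e2 : te (y - 1) = te y := te_subn y 1.
apply: te_inj_neg; try (apply/andP; split; lra).
by rewrite e1 e2 ex ey.
Qed.

End Torus.

Section Rec.
Variables (lt : Cs -> Cs -> Prop) (wf : well_founded lt) (V : Type) (v0 : V).
Variable step : Cs -> (Cs -> V) -> V.
Hypothesis step_ext : forall x h h', (forall y, lt y x -> h y = h' y) ->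
  step x h = step x h'.

Definition recF : Cs -> V :=
  Fix wf (fun _ => V) (fun x (h : forall y, lt y x -> V) =>
    step x (fun y => match pselect (lt y x) with left p => h y p | right _ => v0 end)).

Lemma recF_eq x : recF x = step x recF.
Proof.
rewrite /recF Fix_eq; last first.
  move=> z f g fg; congr step; apply: funext => y.
  by case: (pselect (lt y z)) => // p; rewrite fg.
apply: step_ext => y yx; by case: (pselect (lt y x)).
Qed.
End Rec.

Lemma seg_small (lt : Cs -> Cs -> Prop) (x : Cs) X (g : Cs -> X) (A : set Cs) :
  ~ big [set y | lt y x] -> A `<=` [set y | lt y x] -> ~ big (g @` A).
Proof.
move=> sm Ax [f [fi fA]]; apply: sm.
have H : forall c, exists y, A y /\ g y = f c by move=> c; have [y Ay e] := fA c; exists y.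
have [h Hh] := choice H.
exists h; split; last by move=> c; apply: Ax; case: (Hh c).
by move=> c c' e; apply: fi; rewrite -(Hh c).2 -(Hh c').2 e.
Qed.

Section Main.
Variable R : realType.
Local Notation te := (@torus_e R).
Variables (lt : Cs -> Cs -> Prop) (wf : well_founded lt).
Hypothesis tri : forall x y, lt x y \/ x = y \/ lt y x.
Hypothesis smallS : forall x, ~ big [set y | lt y x].

Definition H1 : set R := [set s | 0 <= s <= 1/2].
Definition H2 : set R := [set s | -(1/2) <= s <= 0].
Definition flag (x : Cs) : Prop := big (@task R x `&` H1) \/ big (@task R x `&` H2).

Definition Bprev (h : Cs -> R * R) x : set (R * R) :=
  [set te (h y).2 | y in [set y | lt y x]] `|`
  [set te ((h y).2 + @tgt R y) | y in [set y | lt y x]].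
Definition Eprev (h : Cs -> R * R) x : set (R * R) :=
  [set te (h y).1 | y in [set y | lt y x /\ flag y]].
Definition chooseE x (Bp : set (R * R)) : R :=
  get [set s | @task R x s /\ (H1 s \/ H2 s) /\ ~ (Bp `|` [set te 0]) (te s)].
Definition chooseB x (Ep : set (R * R)) : R :=
  get [set b | 1/48 <= b <= 1/24 /\ ~ Ep (te b) /\ ~ Ep (te (b + @tgt R x))].
Definition stepM x (h : Cs -> R * R) : R * R :=
  let e := chooseE x (Bprev h x) in
  (e, chooseB x (Eprev h x `|` [set p | flag x /\ p = te e])).

Lemma stepM_ext x h h' : (forall y, lt y x -> h y = h' y) -> stepM x h = stepM x h'.
Proof.
move=> hh; rewrite /stepM.
have -> : Bprev h x = Bprev h' x.
  by rewrite /Bprev; congr (_ `|` _); apply: eq_imagel => y yx; rewrite hh.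
have -> : Eprev h x = Eprev h' x.
  by rewrite /Eprev; apply: eq_imagel => y [yx _]; rewrite hh.
by [].
Qed.

Definition sol := recF wf (0, 0) stepM.
Lemma sol_eq x : sol x = stepM x sol.
Proof. exact: (recF_eq wf (0, 0) stepM_ext). Qed.

Definition ex x := (sol x).1.
Definition bx x := (sol x).2.
Definition Ecur x := Eprev sol x `|` [set p | flag x /\ p = te (ex x)].

Lemma ex_eq x : ex x = chooseE x (Bprev sol x).
Proof. by rewrite /ex sol_eq. Qed.
Lemma bx_eq x : bx x = chooseB x (Ecur x).
Proof. by rewrite /bx /Ecur /ex sol_eq. Qed.

Lemma Bprev_small x : ~ big (Bprev sol x `|` [set te 0]).
Proof.
move/bigU => [/bigU [] |]; last exact: big_set1.
- by move=> hb; apply: (seg_small (@smallS x) _ hb).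
- by move=> hb; apply: (seg_small (@smallS x) _ hb).
Qed.

Lemma Ecur_small x : ~ big (Ecur x).
Proof.
move/bigU => [].
  by move=> hb; apply: (seg_small (@smallS x) _ hb) => y [].
move/(big_sub (Z' := [set te (ex x)])) => h; apply: (big_set1 (h _)).
by move=> p [_ ->].
Qed.

Lemma P1 x : flag x -> [/\ @task R x (ex x), (H1 (ex x) \/ H2 (ex x)) &
  ~ (Bprev sol x `|` [set te 0]) (te (ex x))].
Proof.
move=> fx; rewrite ex_eq /chooseE.
set Sm := Bprev sol x `|` [set te 0].
suff : exists s, @task R x s /\ (H1 s \/ H2 s) /\ ~ Sm (te s).
  by move=> /(xgetPex point) [a [b c]]; split.
apply: contrapT => hn; apply: (@Bprev_small x); rewrite -/Sm.
case: fx => bg.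
- apply: (big_sub (Z := te @` (@task R x `&` H1))).
    move=> p [s [ts hs] <-]; apply: contrapT => np; apply: hn; exists s; split => //.
    by split => //; left.
  apply: big_inj_image bg => s s' [_ hs] [_ hs']; exact: te_inj_half.
- apply: (big_sub (Z := te @` (@task R x `&` H2))).
    move=> p [s [ts hs] <-]; apply: contrapT => np; apply: hn; exists s; split => //.
    by split => //; right.
  apply: big_inj_image bg => s s' [_ hs] [_ hs']; exact: te_inj_neg.
Qed.

Lemma P2 x : [/\ 1/48 <= bx x <= 1/24, ~ Ecur x (te (bx x)) &
  ~ Ecur x (te (bx x + @tgt R x))].
Proof.
rewrite bx_eq /chooseB.
suff : exists b, 1/48 <= b <= 1/24 /\ ~ Ecur x (te b) /\ ~ Ecur x (te (b + @tgt R x)).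
  by move=> /(xgetPex point) [a [b c]]; split.
apply: contrapT => hn; apply: (@Ecur_small x).
have /andP [t1 t2] := @tgt_range R x.
set t := @tgt R x in hn t1 t2 *.
have bI := @itv_big R (1/48) (1/24) ltac:(lra).
have : big ([set b | (1/48 <= b <= 1/24) /\ Ecur x (te b)] `|`
            [set b | (1/48 <= b <= 1/24) /\ Ecur x (te (b + t))]).
  apply: big_sub bI => b hb; apply: contrapT => nb; apply: hn; exists b.
  by split => //; split => h; apply: nb; [left | right].
move/bigU => [] bg.
- apply: (big_sub (Z := te @` [set b | (1/48 <= b <= 1/24) /\ Ecur x (te b)])).
    by move=> p [b [_ hb] <-].
  apply: big_inj_image bg => s s' [/andP [h1 h2] _] [/andP [h3 h4] _].
  by apply: te_inj_half; apply/andP; split; lra.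
- apply: (big_sub (Z := (fun b => te (b + t)) @` [set b | (1/48 <= b <= 1/24) /\ Ecur x (te (b + t))])).
    by move=> p [b [_ hb] <-].
  apply: big_inj_image bg => s s' [/andP [h1 h2] _] [/andP [h3 h4] _] e.
  suff : s + t = s' + t by move/addIr.
  by apply: te_inj_half e; apply/andP; split; lra.
Qed.

Definition Bfin : set (R * R) :=
  [set te 0] `|` [set te (bx z) | z in setT] `|` [set te (bx z + @tgt R z) | z in setT].

Lemma P3 y : flag y -> ~ Bfin (te (ex y)).
Proof.
move=> fy; have [_ _ nB] := P1 fy.
have inE z : (y = z \/ lt y z) -> Ecur z (te (ex y)).
  case=> [<-|yz]; first by right.
  by left; exists y.
move=> [[h|[z _ hz]]|[z _ hz]]; first by apply: nB; right.
- case: (@tri z y) => [zy|hzy].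
    by apply: nB; left; left; exists z.
  have [_ h _] := P2 z; apply: h; rewrite hz; apply: inE.
  by case: hzy => [->|]; [left | right].
- case: (@tri z y) => [zy|hzy].
    by apply: nB; left; right; exists z.
  have [_ _ h] := P2 z; apply: h; rewrite hz; apply: inE.
  by case: hzy => [->|]; [left | right].
Qed.


Lemma sum_single k (v : R) : (0 < k)%N ->
  \sum_(i < k) (if (val i == 0)%N then v else 0) = v.
Proof. by case: k => // k _; rewrite big_ord_recl /= big1 ?addr0. Qed.

Lemma te_sum_eq k (a w : 'I_k -> R) : (forall i, te (a i) = te (w i)) ->
  te (\sum_(i < k) a i) = te (\sum_(i < k) w i).
Proof.
elim: k a w => [|k IH] a w h; first by rewrite !big_ord0.
rewrite !big_ord_recr !te_add (h ord_max); congr padd; apply: IH => i; exact: h.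
Qed.

Definition Ssum (W : set R) k : set R :=
  [set \sum_(i < k) g i | g in [set g : 'I_k -> R | forall i, W (g i)]].

Lemma Ssum_countable W k : countable W -> countable (Ssum W k).
Proof.
move=> cW; elim: k => [|k IH].
  apply: (countable_sub (B := [set 0])); last exact: countable1.
  by move=> _ [g _ <-]; rewrite big_ord0.
apply: (countable_sub (B := (fun p : R * R => p.1 + p.2) @` (Ssum W k `*` W))).
  move=> _ [g hg <-]; exists (\sum_(i < k) g (widen_ord (leqnSn k) i), g ord_max).
    by split => /=; [exists (fun i => g (widen_ord (leqnSn k) i)) | exact: hg].
  by rewrite big_ord_recr.
by apply: countable_img; apply: countableX.
Qed.

Lemma sumdiff_countable (F : set (R * R)) (W : set R) m n :
  countable W -> F `<=` te @` W ->
  exists W', countable W' /\ sumdiffT m n F `<=` te @` W'.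
Proof.
move=> cW FW; exists ((fun p : R * R => p.1 - p.2) @` (Ssum W m `*` Ssum W n)); split.
  by apply: countable_img; apply: countableX; apply: Ssum_countable.
move=> _ [a [c [ha [hc ->]]]].
have Ha : forall i, exists w, W w /\ te w = te (a i).
  by move=> i; have [w ? ?] := FW _ (ha i); exists w.
have Hc : forall j, exists w, W w /\ te w = te (c j).
  by move=> j; have [w ? ?] := FW _ (hc j); exists w.
have [wa Hwa] := choice Ha; have [wc Hwc] := choice Hc.
exists (\sum_(i < m) wa i - \sum_(j < n) wc j).
  exists (\sum_(i < m) wa i, \sum_(j < n) wc j) => //.
  by split; [exists wa => // i; case: (Hwa i) | exists wc => // j; case: (Hwc j)].
rewrite !te_add !te_neg (@te_sum_eq _ wa a) ?(@te_sum_eq _ wc c) //.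
- by move=> j; case: (Hwc j).
- by move=> i; case: (Hwa i).
Qed.

Lemma sum_target m n t : (0 < m)%N -> (0 < n)%N -> 1/4 <= t <= 1/3 ->
  sumdiffT m n Bfin (te t).
Proof.
move=> m0 n0 ht; have [x tx] := tgt_surj ht.
exists (fun i : 'I_m => if (val i == 0)%N then bx x + @tgt R x else 0).
exists (fun j : 'I_n => if (val j == 0)%N then bx x else 0).
split; first by move=> i; case: ifP => _; [right; exists x | left; left].
split; first by move=> j; case: ifP => _; [left; right; exists x | left; left].
by rewrite !sum_single // addrAC subrr add0r tx.
Qed.

Definition Kset : set (R * R) := te @` `[(1/4 : R), 1/3]%classic.

Lemma compactK : compact Kset.
Proof.
apply: continuous_compact; last exact: segment_compact.
by apply: continuous_subspaceT => x; exact: te_cont.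
Qed.

Lemma Ksub m n : (0 < m)%N -> (0 < n)%N -> Kset `<=` sumdiffT m n Bfin.
Proof.
move=> m0 n0 _ [t ht <-]; apply: sum_target => //; move: ht; rewrite /= in_itv //.
Qed.

Lemma haarK : ((1/3 - 1/4 : R)%:E <= haarT Kset)%E.
Proof.
have cK : closed Kset.
  by apply: compact_closed; [apply: norm_hausdorff | exact: compactK].
have clp : closed (te @^-1` Kset) by apply: closed_comp cK => x _; exact: te_cont.
have -> : (1/3 - 1/4 : R)%:E = lebesgue_measure (`[(1/4 : R), 1/3]%classic).
  rewrite lebesgue_measure_itv /= lte_fin ifT; last lra.
  by rewrite -EFinD.
rewrite /haarT; apply: le_measure.
- by rewrite inE; exact: measurable_itv.
- rewrite inE.
  have -> : [set t : R | 0 <= t < 1 /\ Kset (te t)] = `[(0 : R), 1[%classic `&` (te @^-1` Kset).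
    by apply/seteqP; split => t; rewrite /= in_itv /=.
  apply: measurableI; first exact: measurable_itv.
  exact: measurable_realfun.closed_measurable.
- move=> t ht; split; last by exists t.
  by move: ht; rewrite /= in_itv /= => /andP [h1 h2]; apply/andP; split; lra.
Qed.


Lemma closed_slice (F : set (R * R)) (a b : R) : closed F ->
  closed [set s | a <= s <= b /\ F (te s)].
Proof.
move=> cF.
have -> : [set s | a <= s <= b /\ F (te s)] = `[a, b]%classic `&` (te @^-1` F).
  by apply/seteqP; split => s; rewrite /= in_itv.
apply: closedI; first exact: itv_closed.
by apply: closed_comp cF => x _; exact: te_cont.
Qed.

Lemma nbig_aux (F : set (R * R)) (G : set R) : F `<=` Bfin -> closed G ->
  (G `<=` H1 \/ G `<=` H2) -> (forall s, G s -> F (te s)) -> ~ big G.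
Proof.
move=> FB cG GH GF bg; have [x tx] := @task_surj R G cG.
have fx : flag x.
  case: GH => GH; [left | right]; rewrite tx; apply: big_sub bg => s Gs; split => //;
    exact: GH.
have [tex _ _] := P1 fx.
apply: (P3 fx); apply: FB; apply: GF; by rewrite -tx.
Qed.

Lemma left0 m n (F : set (R * R)) : F `<=` Bfin -> compact F ->
  haarT (sumdiffT m n F) = 0%E.
Proof.
move=> FB cpF.
have cF : closed F by apply: compact_closed; [apply: norm_hausdorff | exact: cpF].
pose G1 := [set s | 0 <= s <= 1/2 /\ F (te s)].
pose G2 := [set s | -(1/2) <= s <= 0 /\ F (te s)].
have c1 : countable G1.
  apply: contrapT => nc; apply: (@nbig_aux F G1 FB (closed_slice cF)).
  - by left => s [].
  - by move=> s [].
  - exact: perfect_big (closed_slice cF) nc.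
have c2 : countable G2.
  apply: contrapT => nc; apply: (@nbig_aux F G2 FB (closed_slice cF)).
  - by right => s [].
  - by move=> s [].
  - exact: perfect_big (closed_slice cF) nc.
have FW : F `<=` te @` (G1 `|` G2).
  move=> p Fp.
  have [a ea] : exists a, te a = p.
    case: (FB p Fp) => [[->|[z _ <-]]|[z _ <-]]; by eexists.
  have [s [/andP [s1 s2] es]] := te_reduce a.
  exists s; last by rewrite -es.
  case: (leP 0 s) => hs.
  - by left; split; [apply/andP; split; lra | rewrite -es ea].
  - by right; split; [apply/andP; split; lra | rewrite -es ea].
have [W' [cW' sW']] := sumdiff_countable m n (countableU c1 c2) FW.
exact: haarT_countable cW' sW'.
Qed.

Lemma main_sec : exists B : set (R * R), B `<=` torus /\
    forall m n : nat, (0 < m)%N -> (0 < n)%N ->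
      ereal_sup [set haarT (sumdiffT m n F) |
                 F in [set F : set (R * R) | F `<=` B /\ compact F]]
      <> inner_haarT (sumdiffT m n B).
Proof.
exists Bfin; split.
  by move=> p [[->|[z _ <-]]|[z _ <-]]; eexists.
move=> m n m0 n0 e.
have le : (ereal_sup [set haarT (sumdiffT m n F) |
                 F in [set F : set (R * R) | F `<=` Bfin /\ compact F]] <= 0)%E.
  by apply: ge_ereal_sup => _ [F [FB cF] <-]; rewrite left0.
have ge : ((1/3 - 1/4 : R)%:E <= inner_haarT (sumdiffT m n Bfin))%E.
  apply: le_trans haarK _; apply: ereal_sup_ubound; exists Kset => //.
  by split; [exact: Ksub | exact: compactK].
rewrite -e in ge; have := le_trans ge le; rewrite lee_fin; lra.
Qed.

End Main.

Theorem final_thm (R : realType) :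
  exists B : set (R * R), B `<=` torus /\
    forall m n : nat, (0 < m)%N -> (0 < n)%N ->
      ereal_sup [set haarT (sumdiffT m n F) |
                 F in [set F : set (R * R) | F `<=` B /\ compact F]]
      <> inner_haarT (sumdiffT m n B).
Proof.
have [lt [wf tri sm]] := good_order.
exact: (@main_sec R lt wf tri sm).
Qed.

Unset Implicit Arguments.

Theorem proposition5p4 (R : realType) :
  exists B : set (R * R), B `<=` torus /\
    forall m n : nat, (0 < m)%N -> (0 < n)%N ->
      ereal_sup [set haarT (sumdiffT m n F) |
                 F in [set F : set (R * R) | F `<=` B /\ compact F]]
      <> inner_haarT (sumdiffT m n B).
Proof. exact: final_thm. Qed.
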